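(* Consider $n$ agents over a fixed undirected connected graph with symmetric nonnegative weights $a_{ij}=a_{ji}$ ($a_{ij}>0$ iff $i,j$ are neighbors). Assume the CFP solution set $\mathbf{X}^*$ is non-empty. Let $x_i(t)\in\mathbb{R}^m$ evolve according to $$\dot x_i(t)=\sum_{j\in N_i}a_{ij}(x_j(t)-x_i(t))-\tau\Big(\big[x_i(t)-P_{X_i}(x_i(t))\big]+\nabla g_i^+(x_i(t))\Big),\quad i=1,\dots,n,$$ with $\tau>0$. Then the agents reach consensus asymptotically and there is $x^*\in\mathbf{X}^*$ with $\lim_{t\to\infty}x_i(t)=x^*$ for all $i$.
   Context: For each $i$, $g_i:\mathbb{R}^m\to\mathbb{R}$ convex continuous, $X_i\subset\mathbb{R}^m$ closed convex, $X=\bigcap_i X_i$; the CFP asks for $x$ with $g_i(x)\le0$ for all $i$ and $x\in X$, with solution set $\mathbf{X}^*$. $g_i^+=\max[g_i,0]$; $\nabla g_i^+(x)$ is a subgradient of $g_i^+$ at $x$, chosen as $0$ if $g_i(x)\le0$ and as a subgradient of $g_i$ otherwise, piecewise continuous in $x$; $P_{X_i}$ is Euclidean projection onto $X_i$. Consensus means $\|x_i(t)-x_j(t)\|\to0$ for all $i,j$. *)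

(* Defs.v *)
From HB Require Import structures.
From mathcomp Require Import all_boot all_order all_algebra.
From mathcomp Require Import all_classical all_reals all_analysis.
Set Implicit Arguments. Unset Strict Implicit. Unset Printing Implicit Defensive.
Import Order.TTheory GRing.Theory Num.Theory.
Import numFieldNormedType.Exports.
Local Open Scope classical_set_scope.
Local Open Scope ring_scope.

Section Defs.
Variables (R : realType) (m : nat).

Definition dotv (u v : 'rV[R]_m) : R := \sum_(k < m) u 0 k * v 0 k.
Definition sqdist (u v : 'rV[R]_m) : R := dotv (u - v) (u - v).

Definition convex_fun (f : 'rV[R]_m -> R) : Prop :=
  forall u v (l : R), 0 <= l <= 1 ->
    f (l *: u + (1 - l) *: v) <= l * f u + (1 - l) * f v.

Definition is_subgradient (f : 'rV[R]_m -> R) (x d : 'rV[R]_m) : Prop :=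
  forall y, f x + dotv d (y - x) <= f y.

Definition is_proj (A : set 'rV[R]_m) (x p : 'rV[R]_m) : Prop :=
  A p /\ forall y, A y -> sqdist x p <= sqdist x y.

End Defs.

(* Main.v *)
Require Import Defs.
From HB Require Import structures.
From mathcomp Require Import all_boot all_order all_algebra.
From mathcomp Require Import all_classical all_reals all_analysis.
From mathcomp Require Import ring lra.
Import Order.TTheory GRing.Theory Num.Theory.
Import numFieldNormedType.Exports.
Local Open Scope classical_set_scope.
Local Open Scope ring_scope.

Section Dot.
Variables (R : realType) (m : nat).
Implicit Types u v w : 'rV[R]_m.

Lemma dotvC u v : dotv u v = dotv v u.
Proof. by apply: eq_bigr => k _; rewrite mulrC. Qed.

Lemma dotvDr u v w : dotv u (v + w) = dotv u v + dotv u w.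
Proof. by rewrite /dotv -big_split; apply: eq_bigr => k _; rewrite !mxE mulrDr. Qed.

Lemma dotvNr u v : dotv u (- v) = - dotv u v.
Proof. by rewrite /dotv -sumrN; apply: eq_bigr => k _; rewrite !mxE mulrN. Qed.

Lemma dotvBr u v w : dotv u (v - w) = dotv u v - dotv u w.
Proof. by rewrite dotvDr dotvNr. Qed.

Lemma dotvZr u v (c : R) : dotv u (c *: v) = c * dotv u v.
Proof. by rewrite /dotv mulr_sumr; apply: eq_bigr => k _; rewrite !mxE mulrCA. Qed.

Lemma dotv0r u : dotv u 0 = 0.
Proof. by rewrite /dotv big1 // => k _; rewrite mxE mulr0. Qed.

Lemma dotv_sumr (I : finType) u (c : I -> R) (w : I -> 'rV[R]_m) :
  dotv u (\sum_j c j *: w j) = \sum_j c j * dotv u (w j).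
Proof.
rewrite /dotv; under eq_bigr do rewrite summxE mulr_sumr.
rewrite exchange_big /=; apply: eq_bigr => j _; rewrite mulr_sumr.
by apply: eq_bigr => k _; rewrite !mxE mulrCA.
Qed.

Lemma dotv_ge0 u : 0 <= dotv u u.
Proof. by apply: sumr_ge0 => k _; rewrite -expr2 sqr_ge0. Qed.

Lemma sqdist_ge0 u v : 0 <= sqdist u v.
Proof. exact: dotv_ge0. Qed.

Lemma coord_le_norm u k : `|u 0 k| <= `|u|.
Proof.
rewrite [leRHS]/Num.Def.normr /= mx_normrE.
by apply: le_trans; last exact: (le_bigmax _ _ (ord0, k)).
Qed.

Lemma norm_sq_le u : `|u| ^+ 2 <= dotv u u.
Proof.
have [->|] := eqVneq (`|u|) 0; first by rewrite expr0n /= dotv_ge0.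
move=> H; have [[i k] /= E] := @mx_norm_neq0 R 1 m u H.
rewrite -[`|u|]/(mx_norm u) E.
rewrite (ord1 i) /dotv (bigD1 k) //= -[leLHS]addr0 real_normK ?num_real //.
by rewrite lerD // ?sumr_ge0 // => j _; rewrite -expr2 sqr_ge0.
Qed.

Lemma dotv_le_norm u : dotv u u <= m%:R * `|u| ^+ 2.
Proof.
have -> : m%:R * `|u| ^+ 2 = \sum_(k < m) `|u| ^+ 2.
  by rewrite sumr_const card_ord mulr_natl.
apply: ler_sum => k _; rewrite -expr2 -real_normK ?num_real //.
by rewrite lerXn2r ?nnegrE // coord_le_norm.
Qed.

End Dot.

Section Proj.
Variables (R : realType) (m : nat).
Implicit Types u v w : 'rV[R]_m.

Lemma sqdist_conv (x p y : 'rV[R]_m) (s : R) :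
  sqdist x (s *: y + (1 - s) *: p) =
  sqdist x p - 2 * s * dotv (x - p) (y - p) + s ^+ 2 * dotv (y - p) (y - p).
Proof.
rewrite /sqdist /dotv !mulr_sumr -sumrB -big_split; apply: eq_bigr => k _.
rewrite !mxE /=; ring.
Qed.

Lemma proj_vi (A : set 'rV[R]_m) (x p y : 'rV[R]_m) : convex_set A -> is_proj A x p -> A y ->
  dotv (x - p) (y - p) <= 0.
Proof.
move=> cA [Ap pmin] Ay.
set c := dotv (x - p) (y - p); set D := dotv (y - p) (y - p).
have D0 : 0 <= D by exact: dotv_ge0.
rewrite leNgt; apply/negP => c0.
pose s := c / (c + D + 1).
have cD : 0 < c + D + 1 by lra.
have s0 : 0 <= s by rewrite divr_ge0 // ltW.
have s1 : s <= 1 by rewrite ler_pdivrMr // mul1r; lra.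
have := cA y p (Itv01 s0 s1); rewrite !inE => /(_ Ay Ap) Az.
have := pmin _ Az; rewrite /= sqdist_conv /= -/c -/D => H.
have sp : 0 < s by rewrite divr_gt0.
have H2 : 2 * c <= s * D by nra.
have H3 : s * D <= c by rewrite /s mulrAC ler_pdivrMr //; nra.
lra.
Qed.
End Proj.

Section Der.
Variables (R : realType) (m : nat).

Lemma is_derive_coord (f : R -> 'rV[R]_m) (t : R) (v : 'rV[R]_m) k :
  is_derive t 1 f v -> is_derive t 1 (fun s => f s 0 k) (v 0 k).
Proof.
move=> df; have dv := @ex_derive _ _ _ _ _ _ _ df.
have dk := (derivable_mxP f t 1).1 dv 0 k.
apply: DeriveDef => //.
have := derive_mx dv; rewrite derive_val => ->; by rewrite mxE.
Qed.

Lemma is_derive_sqdist (f : R -> 'rV[R]_m) (y : 'rV[R]_m) (t : R) (v : 'rV[R]_m) :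
  is_derive t 1 f v ->
  is_derive t 1 (fun s => sqdist (f s) y) (2 * dotv (f t - y) v).
Proof.
move=> df.
have -> : (fun s => sqdist (f s) y) =
   \sum_(k < m) ((fun s => f s 0 k - y 0 k) * (fun s => f s 0 k - y 0 k)).
  apply/funext => s; rewrite fct_sumE /sqdist /dotv; apply: eq_bigr => k _.
  by rewrite !mxE.
have dk : forall k, is_derive t 1 (fun s => f s 0 k - y 0 k) (v 0 k).
  move=> k; have dk := @is_derive_coord f t v k df.
  have -> : (fun s => f s 0 k - y 0 k) = (fun s => f s 0 k) - cst (y 0 k) by [].
  have := is_deriveB dk (is_derive_cst (y 0 k) t 1). move=> H; apply: is_derive_eq H _. by rewrite subr0.
have := is_derive_sum (fun k => is_deriveM (dk k) (dk k)) => H; apply: is_derive_eq H _.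
rewrite /dotv mulr_sumr; apply: eq_bigr => k _; rewrite !mxE /=.
rewrite /GRing.scale /=; ring.
Qed.

Lemma nincr_of_derive (f df : R -> R) (s t : R) :
  0 < s -> s <= t ->
  (forall u, s <= u <= t -> is_derive u 1 f (df u)) ->
  (forall u, s < u < t -> df u <= 0) -> f t <= f s.
Proof.
move=> s0 st H Hle.
have H' : forall u, s <= u <= t -> derivable f u 1 /\ 'D_1 f u = df u.
  by move=> u /H [? ?].
have := @ler0_derive1_le_cc R f s t.
apply.
- move=> u; rewrite in_itv /= => /andP[su ut].
  have hu : s <= u <= t by rewrite !ltW.
  by case: (H' u hu).
- move=> u; rewrite in_itv /= derive1E => /andP[su ut].
  have hu : s <= u <= t by rewrite !ltW.
  by case: (H' u hu) => _ ->; rewrite Hle // su.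
- apply: derivable_within_continuous => u; rewrite in_itv /= => /andP[su ut].
  have hu : s <= u <= t by rewrite su.
  by case: (H' u hu).
- by rewrite in_itv /= st lexx.
- by rewrite in_itv /= st lexx.
- done.
Qed.

End Der.

Section Main.
Variables (R : realType) (n m : nat)
  (a : 'I_n -> 'I_n -> R)
  (g : 'I_n -> 'rV[R]_m -> R) (Xs : 'I_n -> set 'rV[R]_m)
  (P : 'I_n -> 'rV[R]_m -> 'rV[R]_m)
  (dg : 'I_n -> 'rV[R]_m -> 'rV[R]_m)
  (tau : R) (x : 'I_n -> R -> 'rV[R]_m).
Implicit Types (t s u : R) (y z : 'rV[R]_m) (i j : 'I_n).
Hypothesis asym : forall i j, a i j = a j i.
Hypothesis apos : forall i j, 0 <= a i j.
Hypothesis gcont : forall i, continuous (g i).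
Hypothesis Xcl : forall i, closed (Xs i).
Hypothesis Xconv : forall i, convex_set (Xs i).
Hypothesis Pproj : forall i y, is_proj (Xs i) y (P i y).
Hypothesis dg0 : forall i y, g i y <= 0 -> dg i y = 0.
Hypothesis dgsub : forall i y, 0 < g i y -> is_subgradient (g i) y (dg i y).
Hypothesis tau0 : 0 < tau.

Definition vel i t := \sum_(j < n) a i j *: (x j t - x i t)
        - tau *: ((x i t - P i (x i t)) + dg i (x i t)).
Hypothesis deriv : forall i (t : R), 0 < t -> is_derive t 1 (x i) (vel i t).

Definition V (y : 'rV[R]_m) t := \sum_(i < n) sqdist (x i t) y.
Definition gp i z := Order.max (g i z) 0.
Definition Dfun t := \sum_(i < n) \sum_(j < n) a i j * sqdist (x i t) (x j t)
   + 2 * tau * \sum_(i < n) (sqdist (x i t) (P i (x i t)) + gp i (x i t)).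
Definition sol (y : 'rV[R]_m) := forall i, g i y <= 0 /\ Xs i y.

Lemma V_derive y t : 0 < t ->
  is_derive t 1 (V y) (\sum_(i < n) 2 * dotv (x i t - y) (vel i t)).
Proof.
move=> t0.
have -> : V y = \sum_(i < n) (fun s => sqdist (x i s) y).
  by apply/funext => s; rewrite fct_sumE.
have := is_derive_sum (fun i => @is_derive_sqdist _ _ _ y _ _ (deriv i t t0)).
by move=> H; apply: is_derive_eq H _.
Qed.

Lemma V_ge0 y t : 0 <= V y t.
Proof. by apply: sumr_ge0 => i _; exact: sqdist_ge0. Qed.

Lemma gp_ge0 i z : 0 <= gp i z.
Proof. by rewrite /gp le_max lexx orbT. Qed.

Lemma D_ge0 t : 0 <= Dfun t.
Proof.
apply: addr_ge0.
  by apply: sumr_ge0 => i _; apply: sumr_ge0 => j _; rewrite mulr_ge0 // sqdist_ge0.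
apply: mulr_ge0; first by rewrite mulr_ge0 // ltW.
by apply: sumr_ge0 => i _; rewrite addr_ge0 // ?sqdist_ge0 // gp_ge0.
Qed.

Lemma proj_bound i z y : Xs i y ->
  sqdist z (P i z) <= dotv (z - y) (z - P i z).
Proof.
move=> Xy; have := @proj_vi _ _ _ _ _ _ (Xconv i) (Pproj i z) Xy.
have -> : dotv (z - y) (z - P i z) =
   sqdist z (P i z) - dotv (z - P i z) (y - P i z).
  rewrite /sqdist /dotv -sumrB; apply: eq_bigr => k _; rewrite !mxE /=; ring.
lra.
Qed.

Lemma sub_bound i z y : g i y <= 0 -> gp i z <= dotv (z - y) (dg i z).
Proof.
move=> gy; rewrite /gp; have [gz|gz] := leP (g i z) 0.
  by rewrite dg0 // dotv0r.
have := dgsub i z gz y.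
have -> : dotv (z - y) (dg i z) = - dotv (dg i z) (y - z).
  rewrite /dotv -sumrN; apply: eq_bigr => k _; rewrite !mxE /=; ring.
lra.
Qed.

Lemma consensus_id t y :
  \sum_(i < n) \sum_(j < n) a i j * (2 * dotv (x i t - y) (x j t - x i t))
  = - \sum_(i < n) \sum_(j < n) a i j * sqdist (x i t) (x j t).
Proof.
set S := \sum_(i < n) \sum_(j < n) a i j * dotv (x i t - y) (x j t - x i t).
have S' : S = \sum_(i < n) \sum_(j < n) a i j * dotv (x j t - y) (x i t - x j t).
  rewrite /S exchange_big /=; apply: eq_bigr => i _; apply: eq_bigr => j _.
  by rewrite asym.
have -> : \sum_(i < n) \sum_(j < n) a i j * (2 * dotv (x i t - y) (x j t - x i t))
   = S + S.
  rewrite /S -big_split; apply: eq_bigr => i _.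
  rewrite -big_split; apply: eq_bigr => j _ /=; ring.
rewrite {2}S' /S -big_split -sumrN; apply: eq_bigr => i _.
rewrite -big_split -sumrN; apply: eq_bigr => j _ /=.
rewrite -mulrDr -mulrN; congr (_ * _).
rewrite /sqdist /dotv -big_split -sumrN; apply: eq_bigr => k _; rewrite !mxE /=; ring.
Qed.

Lemma V_deriv_le y t : sol y ->
  \sum_(i < n) 2 * dotv (x i t - y) (vel i t) <= - Dfun t.
Proof.
move=> sy.
have E : forall i, 2 * dotv (x i t - y) (vel i t) =
   \sum_(j < n) a i j * (2 * dotv (x i t - y) (x j t - x i t))
   - 2 * tau * (dotv (x i t - y) (x i t - P i (x i t))
                + dotv (x i t - y) (dg i (x i t))).
  move=> i; rewrite /vel [in LHS]dotvBr [in LHS]dotv_sumr [in LHS]dotvZr [in LHS]dotvDr mulrBr mulr_sumr.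
  congr (_ - _); last by ring.
  by apply: eq_bigr => j _; ring.
rewrite (eq_bigr _ (fun i _ => E i)) sumrB consensus_id /Dfun -mulr_sumr.
have HQ : \sum_(i < n) (sqdist (x i t) (P i (x i t)) + gp i (x i t)) <=
   \sum_(i < n) (dotv (x i t - y) (x i t - P i (x i t))
                + dotv (x i t - y) (dg i (x i t))).
  apply: ler_sum => i _; apply: lerD.
    by apply: proj_bound; case: (sy i).
  by apply: sub_bound; case: (sy i).
have t2 : 0 <= 2 * tau by rewrite mulr_ge0 // ltW.
have := ler_wpM2l t2 HQ.
lra.
Qed.

Lemma V_decr y (c : R) s t : sol y -> 0 < s -> s <= t ->
  (forall u, s < u < t -> c <= Dfun u) -> V y t + c * t <= V y s + c * s.
Proof.
move=> sy s0 st Hc.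
apply: (@nincr_of_derive R (fun u => V y u + c * u)
  (fun u => \sum_(i < n) 2 * dotv (x i u - y) (vel i u) + c) s t) => //.
- move=> u /andP[su ut]; have u0 : 0 < u by apply: lt_le_trans su.
  have H1 := V_derive y u u0.
  have := is_deriveD H1 (is_deriveZ c (is_derive_id u 1)).
  have -> : (fun u => V y u + c * u) = V y + c *: id.
    by apply/funext => w.
  move=> H; apply: is_derive_eq H _.
  by rewrite /GRing.scale /= mulr1.
- move=> u /andP[su ut]; have := V_deriv_le y u sy; have := Hc u.
  rewrite su ut => /(_ isT); lra.
Qed.

Lemma freq_small y0 : sol y0 ->
  forall e T, 0 < e -> exists t, T <= t /\ Dfun t < e.
Proof.
move=> sy e T e0; apply: contrapT => nH.
have Hge : forall t, T <= t -> e <= Dfun t.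
  move=> t Tt; rewrite leNgt; apply/negP => Dt; apply: nH; by exists t.
set T1 := Order.max T 1.
have T11 : 1 <= T1 by rewrite le_max lexx orbT.
have TT1 : T <= T1 by rewrite le_max lexx.
have V0 := V_ge0 y0 T1.
set t := T1 + V y0 T1 / e + 1.
have Vt := V_ge0 y0 t.
have Ve : 0 <= V y0 T1 / e by rewrite divr_ge0 // ltW.
have := @V_decr y0 e T1 t sy.
have H : T1 <= t by rewrite /t; lra.
move=> /(_ (lt_le_trans ltr01 T11) H) => /(_ _).
have : V y0 T1 = e * (V y0 T1 / e) by rewrite mulrCA divff ?mulr1 // gt_eqF.
move=> Ee Hd.
have : V y0 t + e * t <= V y0 T1 + e * T1.
  apply: Hd => u /andP[u1 _]; apply: Hge; apply: le_trans TT1 (ltW u1).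
rewrite /t; nra.
Qed.

Lemma sqdist_le_V i y t : sqdist (x i t) y <= V y t.
Proof.
rewrite /V (bigD1 i) //= -[leLHS]addr0 lerD //.
by apply: sumr_ge0 => j _; exact: sqdist_ge0.
Qed.

Lemma V_mono y s t : sol y -> 0 < s -> s <= t -> V y t <= V y s.
Proof.
move=> sy s0 st; have := @V_decr y 0 s t sy s0 st.
by rewrite !mul0r !addr0; apply => u _; exact: D_ge0.
Qed.

Lemma edge_bound k l t : a k l * sqdist (x k t) (x l t) <= Dfun t.
Proof.
rewrite /Dfun; apply: le_trans (_ : \sum_(i < n) \sum_(j < n) a i j * sqdist (x i t) (x j t) <= _).
  rewrite (bigD1 k) //= (bigD1 l) //= -addrA -[leLHS]addr0 lerD //.
  apply: addr_ge0; first by apply: sumr_ge0 => j _; rewrite mulr_ge0 // sqdist_ge0.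
  apply: sumr_ge0 => i _; apply: sumr_ge0 => j _; rewrite mulr_ge0 // sqdist_ge0.
  done.
rewrite lerDl; apply: mulr_ge0; first by rewrite mulr_ge0 // ltW.
by apply: sumr_ge0 => i _; rewrite addr_ge0 // ?sqdist_ge0 // gp_ge0.
Qed.

Lemma proj_term_bound i t : 2 * tau * (sqdist (x i t) (P i (x i t)) + gp i (x i t)) <= Dfun t.
Proof.
rewrite /Dfun; apply: le_trans (_ : 2 * tau * \sum_(i < n) (sqdist (x i t) (P i (x i t)) + gp i (x i t)) <= _).
  apply: ler_wpM2l; first by rewrite mulr_ge0 // ltW.
  rewrite (bigD1 i) //= -[leLHS]addr0 lerD //.
  by apply: sumr_ge0 => j _; rewrite addr_ge0 // ?sqdist_ge0 // gp_ge0.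
rewrite lerDr; apply: sumr_ge0 => k _; apply: sumr_ge0 => j _.
by rewrite mulr_ge0 // sqdist_ge0.
Qed.

Definition freqF (Q : R -> R -> Prop) : set_system R :=
  filter_from [set p : R * R | 0 < p.2] (fun p => [set t | p.1 <= t /\ Q p.2 t]).

Lemma freqF_proper (Q : R -> R -> Prop) :
  (forall e e' t, e <= e' -> Q e t -> Q e' t) ->
  (forall e T, 0 < e -> exists t, T <= t /\ Q e t) -> ProperFilter (freqF Q).
Proof.
move=> mono ex.
have FF : Filter (freqF Q).
  apply: filter_from_filter; first by exists (0, 1) => /=.
  move=> [T1 e1] [T2 e2] /= e10 e20.
  exists (Order.max T1 T2, Order.min e1 e2) => /=; first by rewrite lt_min e10.
  move=> t /= [Tt Qt]; move: Tt; rewrite ge_max => /andP[T1t T2t].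
  split; split => //.
    by apply: mono Qt; rewrite ge_min lexx.
  by apply: mono Qt; rewrite ge_min lexx orbT.
apply: filter_from_proper => -[T e] /= e0; have [t [Tt Qt]] := ex e T e0.
by exists t.
Qed.

Lemma freqF_ge (Q : R -> R -> Prop) T : freqF Q [set t | T <= t].
Proof. by exists (T, 1) => //= t []. Qed.

Lemma freqF_Q (Q : R -> R -> Prop) e : 0 < e -> freqF Q (Q e).
Proof. by move=> e0; exists (0, e) => //= t []. Qed.

Lemma norm_lt_of_sq (u : 'rV[R]_m) e : 0 < e -> dotv u u < e ^+ 2 -> `|u| < e.
Proof.
move=> e0 h; have hu := @norm_sq_le R m u; rewrite ltNge; apply/negP => eu.
have n0 := normr_ge0 u.
have : e ^+ 2 <= `|u| ^+ 2 by rewrite !expr2; nra.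
lra.
Qed.

Section Limit.
Variables (i0 : 'I_n) (xs : 'rV[R]_m).
Hypothesis aconn : forall i j, connect (fun k l => 0 < a k l) i j.
Hypothesis Hfreq : forall e T, 0 < e ->
  exists t, T <= t /\ (Dfun t < e /\ `|x i0 t - xs| < e).

Let H := freqF (fun e t => Dfun t < e /\ `|x i0 t - xs| < e).
Let HF : ProperFilter H.
Proof.
apply: freqF_proper => // e e' t ee' [h1 h2]; split; exact: lt_le_trans ee'.
Qed.
Existing Instance HF.

Lemma L_ex2 (P1 P2 : set R) : (\forall t \near H, P1 t) -> (\forall t \near H, P2 t) ->
  exists t, P1 t /\ P2 t.
Proof. by move=> h1 h2; have [t [? ?]] := filter_ex (filterI h1 h2); exists t. Qed.

Lemma L_D e : 0 < e -> \forall t \near H, Dfun t < e.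
Proof.
move=> e0; have := @freqF_Q (fun e t => Dfun t < e /\ `|x i0 t - xs| < e) e e0.
by apply: filterS => t [].
Qed.

Lemma L_x0 e : 0 < e -> \forall t \near H, `|x i0 t - xs| < e.
Proof.
move=> e0; have := @freqF_Q (fun e t => Dfun t < e /\ `|x i0 t - xs| < e) e e0.
by apply: filterS => t [].
Qed.

Lemma L_ge T : \forall t \near H, T <= t.
Proof. exact: (@freqF_ge (fun e t => Dfun t < e /\ `|x i0 t - xs| < e)). Qed.

Lemma L_edge k l : 0 < a k l -> forall e, 0 < e ->
  \forall t \near H, `|x k t - x l t| < e.
Proof.
move=> akl e e0; apply: filterS (L_D _ (mulr_gt0 akl (exprn_gt0 2 e0))) => t Dt.
apply: norm_lt_of_sq => //; have := edge_bound k l t.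
rewrite /sqdist => h.
have : a k l * dotv (x k t - x l t) (x k t - x l t) < a k l * e ^+ 2 by lra.
by rewrite ltr_pM2l.
Qed.

Lemma L_conn i j : forall e, 0 < e -> \forall t \near H, `|x i t - x j t| < e.
Proof.
have /connectP [p pth ->] := aconn i j.
elim: p i pth => [|k p IH] i /=.
  by move=> _ e e0; apply: nearW => t; rewrite subrr normr0.
move=> /andP[ik pth] e e0.
have e2 : 0 < e / 2 by rewrite divr_gt0.
apply: filterS2 (L_edge _ _ ik _ e2) (IH k pth _ e2) => t h1 h2.
have -> : x i t - x (last k p) t = (x i t - x k t) + (x k t - x (last k p) t).
  by rewrite addrA subrK.
apply: le_lt_trans (ler_normD _ _) _; lra.
Qed.

Lemma L_x i e : 0 < e -> \forall t \near H, `|x i t - xs| < e.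
Proof.
move=> e0; have e2 : 0 < e / 2 by rewrite divr_gt0.
apply: filterS2 (L_conn i i0 _ e2) (L_x0 _ e2) => t h1 h2.
have -> : x i t - xs = (x i t - x i0 t) + (x i0 t - xs) by rewrite addrA subrK.
apply: le_lt_trans (ler_normD _ _) _; lra.
Qed.

Lemma L_P i e : 0 < e -> \forall t \near H, `|P i (x i t) - xs| < e.
Proof.
move=> e0; have e2 : 0 < e / 2 by rewrite divr_gt0.
have t2 : 0 < 2 * tau by rewrite mulr_gt0.
apply: filterS2 (L_D _ (mulr_gt0 t2 (exprn_gt0 2 e2))) (L_x i _ e2) => t Dt h2.
have hp : `|x i t - P i (x i t)| < e / 2.
  apply: norm_lt_of_sq => //; have := proj_term_bound i t.
  have := gp_ge0 i (x i t); rewrite /sqdist => g0 h.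
  have : 2 * tau * dotv (x i t - P i (x i t)) (x i t - P i (x i t)) < 2 * tau * (e / 2) ^+ 2.
    nra.
  by rewrite ltr_pM2l.
have -> : P i (x i t) - xs = - (x i t - P i (x i t)) + (x i t - xs).
  by rewrite opprB addrA subrK.
apply: le_lt_trans (ler_normD _ _) _; rewrite normrN; lra.
Qed.

Lemma L_X i : Xs i xs.
Proof.
apply: (@closed_cvg _ _ H _ (fun t => P i (x i t)) (Xs i) (Xcl i)).
  by apply: nearW => t; exact: (Pproj i _).1.
by apply/cvgrPdistC_lt => e e0; exact: L_P.
Qed.

Lemma L_g i : g i xs <= 0.
Proof.
rewrite leNgt; apply/negP => gpos.
have hx : x i @ H --> xs by apply/cvgrPdistC_lt => e e0; exact: L_x.
have cg := cvg_comp _ _ hx (gcont i xs).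
have g2 : 0 < g i xs / 2 by rewrite divr_gt0.
have t2 : 0 < 2 * tau by rewrite mulr_gt0.
move/cvgrPdist_lt: cg => /(_ _ g2) cg.
have [t [h1 h2]] := filter_ex (filterI cg (L_D _ (mulr_gt0 t2 g2))).
have := proj_term_bound i t; have := @sqdist_ge0 R m (x i t) (P i (x i t)).
have := ler_norm (g i xs - (g i \o x i) t); rewrite /gp /=.
have := le_max (g i (x i t)) (g i (x i t)) 0; rewrite lexx /= => hm.
move: h1 => /= h1.
have hm' : g i (x i t) <= Order.max (g i (x i t)) 0 by [].
nra.
Qed.

Lemma L_V e : 0 < e -> \forall t \near H, V xs t < e.
Proof.
move=> e0.
set c : R := n%:R * m%:R.
have c0 : 0 <= c by rewrite mulr_ge0.
set d := Order.min 1 (e / (c + 1)).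
have ec : 0 < e / (c + 1) by rewrite divr_gt0 // ltr_wpDl.
have d0 : 0 < d by rewrite lt_min ltr01 ec.
have d1 : d <= 1 by rewrite ge_min lexx.
have de : d <= e / (c + 1) by rewrite ge_min lexx orbT.
have de' : (c + 1) * d <= e by rewrite mulrC -ler_pdivlMr // ltr_wpDl.
have hall := @filter_forall R 'I_n (fun i t => `|x i t - xs| < d) H _ (fun i => L_x i _ d0).
near=> t.
have ht : forall i, `|x i t - xs| < d by near: t; exact: hall.
have Hi : forall i, sqdist (x i t) xs <= m%:R * d ^+ 2.
  move=> i; apply: le_trans (@dotv_le_norm R m _) _.
  apply: ler_wpM2l => //; rewrite lerXn2r ?nnegrE ?normr_ge0 ?ltW //; exact: ht.
apply: le_lt_trans (_ : \sum_(i < n) m%:R * d ^+ 2 < _).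
  by apply: ler_sum => i _; exact: Hi.
rewrite sumr_const card_ord.
have -> : m%:R * d ^+ 2 *+ n = c * d ^+ 2 by rewrite /c; ring.
have : c * d ^+ 2 <= c * d by rewrite ler_wpM2l // expr2 ler_piMl // ltW.
move: de'; rewrite mulrDl mul1r; lra.
Unshelve. all: end_near. Qed.

End Limit.

Lemma main_result (aconn : forall i j, connect (fun k l => 0 < a k l) i j)
  y0 (sy0 : sol y0) (i0 : 'I_n) :
  (forall i j, `|x i t - x j t| @[t --> +oo%R] --> 0) /\
  exists xs : 'rV[R]_m, sol xs /\ forall i, x i t @[t --> +oo%R] --> xs.
Proof.
pose Q := fun e t => Dfun t < e.
have GF : ProperFilter (freqF Q).
  apply: freqF_proper; last exact: freq_small y0 sy0.
  by move=> e e' t ee'; rewrite /Q => h; apply: lt_le_trans ee'.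
set B := V y0 1.
have B0 : 0 <= B by exact: V_ge0.
set r := 1 + B.
have r0 : 0 < r by rewrite /r; lra.
set K := closed_ball y0 r.
have Kx : forall t, 1 <= t -> K (x i0 t).
  move=> t t1; rewrite /K closed_ballE // /closed_ball_ /= distrC.
  have h1 := @norm_sq_le R m (x i0 t - y0).
  have h2 := sqdist_le_V i0 y0 t.
  have h3 := V_mono y0 1 t sy0 ltr01 t1.
  have n0 := normr_ge0 (x i0 t - y0).
  rewrite /sqdist -/B in h2 h3 *; rewrite /r; nra.
have bK : bounded_set K.
  rewrite /= /bounded_near.
  apply: filterS (nbhs_pinfty_ge (num_real (`|y0| + r))) => M hM z Kz.
  move: Kz; rewrite /K closed_ballE // /closed_ball_ /= => hz.
  have : `|z| <= `|y0| + `|z - y0| by rewrite -{1}(subrK y0 z) addrC ler_normD.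
  rewrite distrC; lra.
have cK : compact K by apply: bounded_closed_compact => //; exact: closed_ball_closed.
have FK : (x i0 @ freqF Q) K.
  by apply: filterS (freqF_ge Q 1) => t /Kx.
have [xs [Kxs clxs]] := cK _ (fmap_proper_filter (x i0) GF) FK.
have Hfreq : forall e T, 0 < e ->
    exists t, T <= t /\ (Dfun t < e /\ `|x i0 t - xs| < e).
  move=> e T e0.
  have := clxs (x i0 @` [set t | T <= t /\ Q e t]) (ball xs e) _ (nbhsx_ballx xs e e0).
  case => [|z [[t [Tt Qt] <-] bz]].
    by exists (T, e) => //= t ht; exists t.
  exists t; split => //; split => //.
  by move: bz; rewrite -ball_normE /ball_ /= distrC.
have sxs : sol xs.
  by move=> i; split; [exact: (L_g i0 xs aconn Hfreq) | exact: (L_X i0 xs aconn Hfreq)].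
have Vlim : forall e, 0 < e -> exists t1, 1 <= t1 /\ V xs t1 < e.
  move=> e e0.
  have [t [h1 h2]] := L_ex2 i0 xs Hfreq _ _ (L_V i0 xs aconn Hfreq _ e0) (@L_ge i0 xs 1).
  by exists t.
have xlim : forall i e, 0 < e -> exists t1, 1 <= t1 /\ forall t, t1 <= t -> `|x i t - xs| < e.
  move=> i e e0; have [t1 [t11 Vt1]] := Vlim _ (exprn_gt0 2 e0).
  exists t1; split => // t tt1; apply: norm_lt_of_sq => //.
  have := sqdist_le_V i xs t; have := V_mono xs t1 t sxs (lt_le_trans ltr01 t11) tt1.
  rewrite /sqdist; lra.
split.
  move=> i j; apply/cvgrPdist_lt => e e0.
  have e2 : 0 < e / 2 by rewrite divr_gt0.
  have [t1 [t11 h1]] := xlim i _ e2.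
  have [t2 [t21 h2]] := xlim j _ e2.
  exists (Order.max t1 t2); split; first exact: num_real.
  move=> t; rewrite gt_max => /andP[tt1 tt2].
  have := h1 t (ltW tt1); have := h2 t (ltW tt2).
  rewrite sub0r normrN normr_id.
  have -> : x i t - x j t = (x i t - xs) - (x j t - xs) by rewrite opprB addrA subrK.
  move=> a1 a2; apply: le_lt_trans (ler_normB _ _) _; lra.
exists xs; split => // i; apply/cvgrPdistC_lt => e e0.
have [t1 [t11 h1]] := xlim i _ e0.
exists t1; split; first exact: num_real.
by move=> t tt1; apply: h1; rewrite ltW.
Qed.

End Main.

Theorem corollary2 (R : realType) (n m : nat)
  (a : 'I_n -> 'I_n -> R)
  (g : 'I_n -> 'rV[R]_m -> R) (Xs : 'I_n -> set 'rV[R]_m)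
  (P : 'I_n -> 'rV[R]_m -> 'rV[R]_m)
  (dg : 'I_n -> 'rV[R]_m -> 'rV[R]_m)
  (tau : R) (x : 'I_n -> R -> 'rV[R]_m) :
  (* undirected connected weighted graph *)
  (forall i j, a i j = a j i) ->
  (forall i j, 0 <= a i j) ->
  (forall i j, connect (fun k l => 0 < a k l) i j) ->
  (* the CFP data *)
  (forall i, convex_fun (g i)) ->
  (forall i, continuous (g i)) ->
  (forall i, closed (Xs i)) ->
  (forall i, convex_set (Xs i)) ->
  (* P i is the Euclidean projection onto X_i *)
  (forall i y, is_proj (Xs i) y (P i y)) ->
  (* dg i is the chosen subgradient of g_i^+ *)
  (forall i y, g i y <= 0 -> dg i y = 0) ->
  (forall i y, 0 < g i y -> is_subgradient (g i) y (dg i y)) ->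
  (* non-empty solution set *)
  (exists y, forall i, g i y <= 0 /\ Xs i y) ->
  0 < tau ->
  (* the dynamics *)
  (forall i (t : R), 0 < t ->
     is_derive t 1 (x i)
       (\sum_(j < n) a i j *: (x j t - x i t)
        - tau *: ((x i t - P i (x i t)) + dg i (x i t)))) ->
  (forall i j, `|x i t - x j t| @[t --> +oo%R] --> 0) /\
  exists xs : 'rV[R]_m, (forall i, g i xs <= 0 /\ Xs i xs) /\
    forall i, x i t @[t --> +oo%R] --> xs.
Proof.
move=> asym apos aconn _ gcont Xcl Xconv Pproj dg0 dgsub [y0 hy0] tau0 deriv.
have [n0|npos] := posnP n.
  split.
    by move=> [k hk]; exfalso; rewrite n0 in hk.
  exists y0; split => // -[k hk].
  by exfalso; rewrite n0 in hk.
exact: (@main_result R n m a g Xs P dg tau x asym apos gcont Xcl Xconv Pproj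
  dg0 dgsub tau0 deriv aconn y0 hy0 (Ordinal npos)).
Qed.
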